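(* For $|q|<1$ and nonzero $z$ with $zq^n\neq1\neq z^{-1}q^n$ for $n\ge1$, \[ \frac{1}{(q;q)_\infty}\left(1+\sum_{n=1}^\infty\frac{(1-z)(1-z^{-1})(-1)^nq^{n(3n-1)/2}(1+q^{3n})}{(1-zq^n)(1-z^{-1}q^n)}\right)=(z+z^{-1}-1)R(z,q)+(1-z)(1-z^{-1}), \] where \[ R(z,q)=\frac{1}{(q;q)_\infty}\left(1+\sum_{n=1}^\infty\frac{(1-z)(1-z^{-1})(-1)^nq^{n(3n+1)/2}(1+q^n)}{(1-zq^n)(1-z^{-1}q^n)}\right). \]
   Context: Notation: $(q;q)_\infty=\prod_{j\ge1}(1-q^j)$. *)

(* Defs.v *)
From Stdlib Require Import Reals.
From Coquelicot Require Import Coquelicot.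
Open Scope C_scope.

Fixpoint qpoch_partial (q : C) (N : nat) : C :=
  match N with
  | O => 1
  | S k => qpoch_partial q k * (1 - q ^ (S k))
  end.

Definition is_qpoch_inf (q P : C) : Prop :=
  filterlim (qpoch_partial q) eventually (locally P).

Definition lhs_term (z q : C) (n : nat) : C :=
  (1 - z) * (1 - / z) * (- 1) ^ n * q ^ ((n * (3 * n - 1)) / 2)%nat
  * (1 + q ^ (3 * n)) / ((1 - z * q ^ n) * (1 - / z * q ^ n)).

Definition R_term (z q : C) (n : nat) : C :=
  (1 - z) * (1 - / z) * (- 1) ^ n * q ^ ((n * (3 * n + 1)) / 2)%nat
  * (1 + q ^ n) / ((1 - z * q ^ n) * (1 - / z * q ^ n)).

(* Main.v *)
Require Import Defs.
From Stdlib Require Import Reals.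
From Coquelicot Require Import Coquelicot.
From Stdlib Require Import Lia Lra.
Open Scope C_scope.

Lemma powC (q : C) a b c : (a = b + c)%nat -> q ^ a = q ^ b * q ^ c.
Proof. intros ->. apply Cpow_add_r. Qed.

Definition e (q : C) (n : nat) : C :=
  (- 1) ^ n * q ^ ((n * (3 * n - 1)) / 2)%nat * (1 + q ^ n).

Lemma exp_R n : (1 <= n)%nat -> ((n * (3 * n + 1)) / 2 = (n * (3 * n - 1)) / 2 + n)%nat.
Proof.
  intros H. replace (n * (3 * n + 1))%nat with (n * (3 * n - 1) + n * 2)%nat by nia.
  rewrite Nat.div_add by lia. reflexivity.
Qed.

Lemma term_id (z q : C) n : (1 <= n)%nat -> z <> 0 -> 1 - z * q ^ n <> 0 -> 1 - / z * q ^ n <> 0 ->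
  lhs_term z q n = (1 - (1 - z) * (1 - / z)) * R_term z q n + (1 - z) * (1 - / z) * e q n.
Proof.
  intros Hn Hz H1 H2. unfold lhs_term, R_term, e.
  rewrite (powC q ((n * (3 * n + 1)) / 2) ((n * (3 * n - 1)) / 2) n) by (apply exp_R; auto).
  rewrite (powC q (3 * n) n (n + n)) by lia. rewrite (Cpow_add_r q n n).
  set (a := q ^ ((n * (3 * n - 1)) / 2)). set (x := q ^ n). set (s := (-1) ^ n).
  assert (HD : (1 - z * x) * (1 - / z * x) <> 0) by (apply Cmult_neq_0; auto).
  field. repeat split; auto.
  - intro Hx. apply H2. assert (E: z = (z - x) + x) by ring. rewrite Hx, Cplus_0_l in E. change (1 - / z * x = 0). rewrite <- E. field; auto.
Qed.



Fixpoint tp (q : C) (k n : nat) : C :=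
  match n with
  | O => 1
  | S m => if (k <=? m)%nat then tp q k m * (1 - q ^ (S m)) else 1
  end.

Fixpoint tri (k : nat) : nat := match k with O => O | S k' => (tri k' + S k')%nat end.

Definition f (q : C) (n k : nat) : C := (- 1) ^ k * tp q k n * q ^ (n * k + tri k).

Fixpoint csum (a : nat -> C) (n : nat) : C :=
  match n with O => 0 | S m => csum a m + a m end.

Definition Sh (q : C) (n : nat) : C := csum (f q n) (S n).

Lemma tp_le q k m : (k <= m)%nat -> tp q k (S m) = tp q k m * (1 - q ^ S m).
Proof. intros H. simpl. apply Nat.leb_le in H. rewrite H. reflexivity. Qed.

Lemma tp_ge q k n : (n <= k)%nat -> tp q k n = 1.
Proof.
  destruct n; simpl; auto. intros H.
  destruct (Nat.leb_spec k n); auto; lia.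
Qed.

Lemma tp_split q k m : (S k <= m)%nat -> tp q k m = (1 - q ^ S k) * tp q (S k) m.
Proof.
  induction m; intros H; [lia|].
  destruct (Nat.eq_dec (S k) (S m)) as [E|E].
  - injection E as ->. rewrite tp_le by lia. rewrite (tp_ge q (S m) (S m)) by lia.
    rewrite (tp_ge q m m) by lia. ring.
  - rewrite !tp_le by lia. rewrite IHm by lia. ring.
Qed.

Lemma tp0 q n : tp q 0 n = qpoch_partial q n.
Proof. induction n; simpl; auto. rewrite IHn. reflexivity. Qed.

Lemma csum_ext a b n : (forall k, (k < n)%nat -> a k = b k) -> csum a n = csum b n.
Proof. induction n; simpl; intros H; auto. rewrite IHn by (intros; apply H; lia). rewrite H by lia. auto. Qed.

Lemma csum_tele a (G : nat -> C) n : csum (fun k => a k - G k + G (S k)) n = csum a n - G O + G n.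
Proof. induction n; simpl. ring. rewrite IHn. ring. Qed.

Definition G (q : C) (m k : nat) : C :=
  match k with O => 0 | S k' => - q ^ (S m + k') * f q m k' end.

Lemma f_step q m k : (k <= m)%nat -> f q (S m) k = f q m k - G q m k + G q m (S k).
Proof.
  intros Hk. unfold G. destruct k as [|k'].
  - unfold f. rewrite tp_le by lia. simpl Cpow at 1.
    rewrite (powC q (S m * 0 + tri 0) (m * 0 + tri 0) 0) by (simpl; lia).
    rewrite (powC q (S m + 0) (S m) 0) by lia. simpl. ring.
  - unfold f. rewrite tp_le by lia. rewrite (tp_split q k' m) by lia.
    set (B := q ^ (m * k' + tri k')).
    rewrite (powC q (S m * S k' + tri (S k')) (m * k' + tri k') (m + k' + k' + 2)) by (simpl; nia).
    rewrite (powC q (m * S k' + tri (S k')) (m * k' + tri k') (m + k' + 1)) by (simpl; nia).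
    rewrite (powC q (m + k' + k' + 2) (m + k' + 1) (S k')) by lia.
    rewrite (powC q (S m + S k') (m + k' + 1) 1) by lia.
    rewrite (powC q (S m + k') (m + k' + 1) 0) by lia.
    fold B. rewrite (Cpow_S q k'), (Cpow_S q m), (Cpow_S (-1) k').
    rewrite (powC q (m + k' + 1) m (S k')) by lia. rewrite (Cpow_S q k'). simpl Cpow. ring.
Qed.

Lemma tri2 k : (2 * tri k = k * (k + 1))%nat.
Proof. induction k; simpl; nia. Qed.

Lemma exp_e m : ((S m * (3 * S m - 1)) / 2 = m * m + tri m + S m + m)%nat.
Proof.
  replace (S m * (3 * S m - 1))%nat with ((m * m + tri m + S m + m) * 2)%nat
    by (pose proof (tri2 m); nia).
  apply Nat.div_mul. lia.
Qed.

Lemma Sh_step q m : Sh q (S m) = Sh q m + e q (S m).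
Proof.
  unfold Sh. change (csum (f q (S m)) (S (S m))) with (csum (f q (S m)) (S m) + f q (S m) (S m)).
  rewrite (csum_ext (f q (S m)) (fun k => f q m k - G q m k + G q m (S k))) by (intros; apply f_step; lia).
  rewrite csum_tele. unfold G, f, e. rewrite exp_e.
  rewrite (tp_ge q m m), (tp_ge q (S m) (S m)) by lia.
  rewrite (powC q (S m * S m + tri (S m)) (m * m + tri m) (S m + m + S m)) by (simpl; nia).
  rewrite (powC q (m * m + tri m + S m + m) (m * m + tri m) (S m + m)) by lia.
  rewrite (powC q (S m + m + S m) (S m + m) (S m)) by lia.
  rewrite (Cpow_S (-1) m). ring.
Qed.

Lemma Sh_formula q n : Sh q n = 1 + csum (fun j => e q (S j)) n.
Proof.
  induction n. unfold Sh, f; simpl. ring.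
  rewrite Sh_step, IHn. simpl. ring.
Qed.

Lemma lim_intro (u : nat -> C) (l : C) :
  (forall eps : R, (0 < eps)%R -> exists N, forall n, (N <= n)%nat -> (Cmod (u n - l) < eps)%R) ->
  filterlim u eventually (locally l).
Proof.
  intros H. apply filterlim_locally. intros eps.
  destruct (H eps (cond_pos eps)) as [N HN]. exists N. intros n Hn.
  apply C_NormedModule_mixin_compat1. apply HN; auto.
Qed.

Lemma sqrt2_lt2 : (sqrt 2 < 2)%R.
Proof.
  pose proof (sqrt_sqrt 2 ltac:(lra)). pose proof Rlt_sqrt2_0. nra.
Qed.

Lemma lim_elim (u : nat -> C) (l : C) :
  filterlim u eventually (locally l) ->
  forall eps : R, (0 < eps)%R -> exists N, forall n, (N <= n)%nat -> (Cmod (u n - l) < eps)%R.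
Proof.
  intros H eps He. apply filterlim_locally with (eps := mkposreal (eps / 2) ltac:(lra)) in H.
  destruct H as [N HN]. exists N. intros n Hn.
  pose proof (C_NormedModule_mixin_compat2 _ _ _ (HN n Hn)) as H. simpl in H.
  pose proof sqrt2_lt2. pose proof Rlt_sqrt2_0.
  change (minus (u n) l) with (u n - l) in H. nra.
Qed.

Lemma pow_le1 (r : R) k : (0 <= r <= 1)%R -> (0 <= r ^ k <= 1)%R.
Proof. intros Hr. induction k; simpl; nra. Qed.

Lemma pow_mono (r : R) a b : (0 <= r <= 1)%R -> (b <= a)%nat -> (r ^ a <= r ^ b)%R.
Proof.
  intros Hr Hab. replace a with (b + (a - b))%nat by lia. rewrite pow_add.
  pose proof (pow_le1 r b Hr). pose proof (pow_le1 r (a - b) Hr). nra.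
Qed.



Lemma csum_bound (a : nat -> C) (c r : R) :
  (0 <= c)%R -> (0 <= r < 1)%R -> (forall k, (Cmod (a k) <= c * r ^ k)%R) ->
  forall M, (Cmod (csum a M) <= c / (1 - r))%R.
Proof.
  intros Hc Hr Ha M.
  assert (H : (Cmod (csum a M) <= c * (1 - r ^ M) / (1 - r))%R).
  { induction M; simpl.
    - rewrite Cmod_0. apply Req_le. field. lra.
    - eapply Rle_trans. apply Cmod_triangle.
      specialize (Ha M).
      replace (c * (1 - r * r ^ M) / (1 - r))%R with (c * (1 - r ^ M) / (1 - r) + c * r ^ M)%R
        by (field; lra). lra. }
  eapply Rle_trans. apply H. apply Rmult_le_compat_r. apply Rlt_le, Rinv_0_lt_compat; lra.
  pose proof (pow_le1 r M ltac:(lra)). nra.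
Qed.

Lemma sum_n_csum (a : nat -> C) m : sum_n a m = csum a (S m).
Proof.
  induction m. rewrite sum_O. simpl. ring.
  rewrite sum_Sn, IHm. reflexivity.
Qed.

Lemma csum_shift (a : nat -> C) n : csum a (S n) = a O + csum (fun k => a (S k)) n.
Proof. induction n. simpl. ring. change (csum a (S (S n))) with (csum a (S n) + a (S n)).
  rewrite IHn. simpl. ring. Qed.

Lemma Sh_split q n : Sh q n = tp q 0 n + csum (fun k => f q n (S k)) n.
Proof. unfold Sh. rewrite csum_shift. unfold f at 1. simpl. rewrite Nat.mul_0_r. simpl. ring. Qed.

Lemma Cmod_m1pow n : Cmod ((- 1) ^ n) = 1%R.
Proof. rewrite Cmod_pow, Cmod_R. replace (Rabs (-1)) with 1%R by (rewrite Rabs_left; lra). apply pow1. Qed.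

Fixpoint gs (r : R) (n : nat) : R := match n with O => 0%R | S m => (gs r m + r ^ S m)%R end.

Lemma gs_bound r n : (0 <= r < 1)%R -> (0 <= gs r n <= 1 / (1 - r))%R.
Proof.
  intros Hr. assert (E : ((1 - r) * gs r n = r - r ^ S n)%R).
  { induction n; simpl. ring. simpl in IHn. nra. }
  pose proof (pow_le1 r (S n) ltac:(lra)).
  assert (0 <= gs r n)%R. { clear E. induction n; simpl. lra. pose proof (pow_le1 r (S n) ltac:(lra)). simpl in *. lra. }
  split; auto. apply (Rmult_le_reg_l (1 - r)). lra. rewrite E. field_simplify; lra.
Qed.

Lemma tp_bound q k n : (Cmod q < 1)%R -> (Cmod (tp q k n) <= exp (gs (Cmod q) n))%R.
Proof.
  intros Hq. pose proof (Cmod_ge_0 q) as Hq0. induction n; simpl tp.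
  - rewrite Cmod_1. simpl. rewrite exp_0. lra.
  - assert (Hg : (0 <= gs (Cmod q) (S n))%R) by (apply gs_bound; lra).
    destruct (k <=? n)%nat.
    + rewrite Cmod_mult. simpl gs. rewrite exp_plus.
      assert (H1 : (Cmod (1 - q ^ S n) <= exp (Cmod q ^ S n))%R).
      { unfold Cminus. eapply Rle_trans. apply Cmod_triangle. rewrite Cmod_opp, Cmod_1, Cmod_pow.
        apply exp_ineq1_le. }
      apply Rmult_le_compat; auto using Cmod_ge_0.
    + rewrite Cmod_1. pose proof (exp_ineq1_le (gs (Cmod q) (S n))). lra.
Qed.

Definition Bq (q : C) : R := exp (1 / (1 - Cmod q)).

Lemma tp_bound' q k n : (Cmod q < 1)%R -> (Cmod (tp q k n) <= Bq q)%R.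
Proof.
  intros Hq. eapply Rle_trans. apply tp_bound; auto. unfold Bq.
  destruct (gs_bound (Cmod q) n) as [_ H]. pose proof (Cmod_ge_0 q); lra.
  destruct H as [H|H]. apply Rlt_le, exp_increasing; auto. rewrite H; lra.
Qed.

Lemma Bq_pos q : (0 < Bq q)%R.
Proof. apply exp_pos. Qed.

Lemma T_bound q n : (Cmod q < 1)%R ->
  (Cmod (csum (fun k => f q n (S k)) n) <= Bq q * Cmod q ^ n / (1 - Cmod q))%R.
Proof.
  intros Hq. pose proof (Cmod_ge_0 q). apply csum_bound.
  - pose proof (Bq_pos q). pose proof (pow_le (Cmod q) n H). nra.
  - lra.
  - intros k. unfold f. rewrite !Cmod_mult, Cmod_m1pow, Cmod_pow.
    pose proof (tp_bound' q (S k) n Hq).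
    assert (Cmod q ^ (n * S k + tri (S k)) <= Cmod q ^ n * Cmod q ^ k)%R.
    { rewrite <- pow_add. apply pow_mono. lra. simpl. nia. }
    pose proof (pow_le (Cmod q) (n * S k + tri (S k)) H). pose proof (Cmod_ge_0 (tp q (S k) n)).
    pose proof (Bq_pos q). nra.
Qed.


Lemma e_bound q j : (Cmod q < 1)%R -> (Cmod (e q (S j)) <= 2 * Cmod q ^ j)%R.
Proof.
  intros Hq. pose proof (Cmod_ge_0 q). unfold e. rewrite exp_e.
  rewrite !Cmod_mult, Cmod_m1pow, Cmod_pow.
  assert (H1 : (Cmod (1 + q ^ S j) <= 2)%R).
  { eapply Rle_trans. apply Cmod_triangle. rewrite Cmod_1, Cmod_pow.
    pose proof (pow_le1 (Cmod q) (S j) ltac:(lra)). lra. }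
  assert (H2 : (Cmod q ^ (j * j + tri j + S j + j) <= Cmod q ^ j)%R) by (apply pow_mono; lra || lia).
  pose proof (pow_le (Cmod q) (j * j + tri j + S j + j) H). pose proof (Cmod_ge_0 (1 + q ^ S j)). nra.
Qed.

Lemma ex_e q : (Cmod q < 1)%R -> ex_series (fun j => e q (S j)).
Proof.
  intros Hq. pose proof (Cmod_ge_0 q).
  apply (@ex_series_le C_AbsRing C_CompleteNormedModule _ (fun j => 2 * Cmod q ^ j)%R).
  - intros n. apply e_bound; auto.
  - apply (ex_series_scal_l (V := R_NormedModule) 2 (fun j => Cmod q ^ j)%R).
    apply ex_series_geom. rewrite Rabs_pos_eq; auto.
Qed.

Lemma qpoch_lim q E : (Cmod q < 1)%R -> is_series (fun j => e q (S j)) E -> is_qpoch_inf q (1 + E).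
Proof.
  intros Hq HE. pose proof (Cmod_ge_0 q). unfold is_qpoch_inf. apply lim_intro.
  intros eps He.
  destruct (lim_elim _ _ HE (eps / 2) ltac:(lra)) as [N1 HN1].
  pose proof (Bq_pos q).
  destruct (pow_lt_1_zero (Cmod q) ltac:(rewrite Rabs_pos_eq; lra) (eps / 2 * (1 - Cmod q) / Bq q))
    as [N2 HN2].
  { apply Rdiv_lt_0_compat; auto. apply Rmult_lt_0_compat; lra. }
  exists (S N1 + N2)%nat. intros n Hn. destruct n as [|m]; [lia|].
  rewrite <- tp0.
  assert (Ht : tp q 0 (S m) = 1 + sum_n (fun j => e q (S j)) m - csum (fun k => f q (S m) (S k)) (S m)).
  { rewrite sum_n_csum, <- Sh_formula, Sh_split. ring. }
  rewrite Ht.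
  replace (1 + sum_n (fun j : nat => e q (S j)) m - csum (fun k : nat => f q (S m) (S k)) (S m) - (1 + E))
    with ((sum_n (fun j : nat => e q (S j)) m - E) + - csum (fun k : nat => f q (S m) (S k)) (S m)) by ring.
  eapply Rle_lt_trans. apply Cmod_triangle. rewrite Cmod_opp.
  specialize (HN1 m ltac:(lia)). change (minus (sum_n (fun j => e q (S j)) m) E) with (sum_n (fun j => e q (S j)) m - E) in HN1.
  pose proof (T_bound q (S m) Hq).
  specialize (HN2 (S m) ltac:(lia)). rewrite Rabs_pos_eq in HN2 by (apply pow_le; auto).
  assert (Bq q * Cmod q ^ S m / (1 - Cmod q) < eps / 2)%R.
  { assert (HB : (Bq q * Cmod q ^ S m < eps / 2 * (1 - Cmod q))%R).
    { apply (Rmult_lt_compat_l (Bq q)) in HN2; auto.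
      replace (Bq q * (eps / 2 * (1 - Cmod q) / Bq q))%R with (eps / 2 * (1 - Cmod q))%R in HN2
        by (field; lra). lra. }
    apply (Rmult_lt_reg_r (1 - Cmod q)). lra.
    replace (Bq q * Cmod q ^ S m / (1 - Cmod q) * (1 - Cmod q))%R with (Bq q * Cmod q ^ S m)%R
      by (field; lra). lra. }
  apply Rlt_le_trans with (eps / 2 + eps / 2)%R; [|lra].
  apply Rplus_lt_le_compat; [exact HN1|lra].
Qed.

Lemma Cmod_1m (x : C) : (1 - Cmod x <= Cmod (1 - x))%R.
Proof.
  pose proof (Cmod_triangle (1 - x) x). replace (1 - x + x) with (RtoC 1) in H by ring.
  rewrite Cmod_1 in H. lra.
Qed.

Lemma tp0_nz q n : (Cmod q < 1)%R -> tp q 0 n <> 0.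
Proof.
  intros Hq. pose proof (Cmod_ge_0 q). induction n; simpl tp.
  - apply C1_nz.
  - replace (0 <=? n)%nat with true by (symmetry; apply Nat.leb_le; lia).
    apply Cmult_neq_0; auto. intro H0.
    assert (Cmod (q ^ S n) = 1%R).
    { assert (Hx : q * q ^ n = 1) by (apply Ceq_minus in H0; simpl in H0; auto).
      simpl. rewrite Hx. apply Cmod_1. }
    rewrite Cmod_pow in H1. pose proof (pow_lt_1_compat (Cmod q) (S n) ltac:(lra) ltac:(lia)). lra.
Qed.

Lemma tp_lb q M d : (Cmod q < 1)%R ->
  (Cmod (tp q 0 M) * (1 - Cmod q ^ M * gs (Cmod q) d) <= Cmod (tp q 0 (M + d)))%R.
Proof.
  intros Hq. pose proof (Cmod_ge_0 q). induction d.
  - simpl. rewrite Nat.add_0_r. lra.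
  - rewrite Nat.add_succ_r. rewrite tp_le by lia. rewrite Cmod_mult.
    pose proof (Cmod_1m (q ^ S (M + d))). rewrite Cmod_pow in H0.
    simpl gs. pose proof (Cmod_ge_0 (tp q 0 M)). pose proof (Cmod_ge_0 (tp q 0 (M + d))).
    pose proof (pow_le1 (Cmod q) M ltac:(lra)). pose proof (pow_le1 (Cmod q) (S d) ltac:(lra)).
    pose proof (pow_le1 (Cmod q) (S (M + d)) ltac:(lra)).
    assert (Ep : (Cmod q ^ S (M + d) = Cmod q ^ M * Cmod q ^ S d)%R) by (rewrite <- pow_add; f_equal; lia).
    pose proof (gs_bound (Cmod q) d ltac:(lra)).
    set (c := Cmod (tp q 0 M)) in *. set (a := (Cmod q ^ M * gs (Cmod q) d)%R) in *.
    assert (0 <= a)%R by (unfold a; nra).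
    set (b := (Cmod q ^ S (M + d))%R) in *.
    assert (c * (1 - a) * (1 - b) <= Cmod (tp q 0 (M + d)) * Cmod (1 - q ^ S (M + d)))%R.
    { pose proof (Cmod_ge_0 (1 - q ^ S (M + d))). destruct (Rle_or_lt 0 (c * (1 - a))).
      - apply Rmult_le_compat; lra.
      - assert (c * (1 - a) * (1 - b) <= 0)%R by nra. nra. }
    assert (Eq7 : (c * (1 - (Cmod q ^ M * (gs (Cmod q) d + Cmod q * Cmod q ^ d))) = c * (1 - a - b))%R)
      by (rewrite Ep; unfold a; simpl pow; ring).
    rewrite Eq7. assert (0 <= c * a * b)%R by (apply Rmult_le_pos; [apply Rmult_le_pos|]; lra).
    assert (c * (1 - a) * (1 - b) = c * (1 - a - b) + c * a * b)%R by ring. lra.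
Qed.

Lemma P_nz q E : (Cmod q < 1)%R -> is_qpoch_inf q E -> E <> 0.
Proof.
  intros Hq HP HE0. subst E. pose proof (Cmod_ge_0 q).
  destruct (pow_lt_1_zero (Cmod q) ltac:(rewrite Rabs_pos_eq; lra) ((1 - Cmod q) / 2) ltac:(lra))
    as [M HM]. specialize (HM M (le_n M)). rewrite Rabs_pos_eq in HM by (apply pow_le; auto).
  set (c := Cmod (tp q 0 M)).
  assert (Hc : (0 < c)%R) by (apply Cmod_gt_0, tp0_nz; auto).
  destruct (lim_elim _ _ HP (c / 2) ltac:(lra)) as [N HN].
  specialize (HN (M + N)%nat ltac:(lia)).
  replace (qpoch_partial q (M + N) - 0) with (tp q 0 (M + N)) in HN by (rewrite tp0; ring).
  pose proof (tp_lb q M N Hq). fold c in H0.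
  pose proof (gs_bound (Cmod q) N ltac:(lra)).
  assert (Cmod q ^ M * gs (Cmod q) N < 1 / 2)%R.
  { destruct H1. apply Rle_lt_trans with (Cmod q ^ M * (1 / (1 - Cmod q)))%R.
    apply Rmult_le_compat_l; auto. apply pow_le; auto.
    apply (Rmult_lt_reg_r (1 - Cmod q)). lra. field_simplify; lra. }
  nra.
Qed.


Lemma ex_R (z q : C) : (Cmod q < 1)%R -> z <> 0 ->
  (forall n : nat, (1 <= n)%nat -> z * q ^ n <> 1 /\ / z * q ^ n <> 1) ->
  ex_series (fun n => R_term z q (S n)).
Proof.
  intros Hq Hz Hn. pose proof (Cmod_ge_0 q).
  set (K := (Cmod z + Cmod (/ z) + 1)%R).
  assert (HK : (0 < K)%R) by (unfold K; pose proof (Cmod_ge_0 z); pose proof (Cmod_ge_0 (/ z)); lra).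
  destruct (pow_lt_1_zero (Cmod q) ltac:(rewrite Rabs_pos_eq; lra) (1 / (2 * K)) ltac:(apply Rdiv_lt_0_compat; lra))
    as [N0 HN0].
  assert (Hlow : forall (u : C) n, (N0 <= n)%nat -> (Cmod u <= K)%R -> (/ 2 <= Cmod (1 - u * q ^ n))%R).
  { intros u n Hn0 Hu. specialize (HN0 n Hn0). rewrite Rabs_pos_eq in HN0 by (apply pow_le; auto).
    pose proof (Cmod_1m (u * q ^ n)). rewrite Cmod_mult, Cmod_pow in H0.
    assert (Cmod u * Cmod q ^ n <= K * (1 / (2 * K)))%R.
    { apply Rmult_le_compat; auto using Cmod_ge_0. apply pow_le; auto. lra. }
    replace (K * (1 / (2 * K)))%R with (/ 2)%R in H1 by (field; lra). lra. }
  apply (ex_series_incr_n _ N0).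
  set (w := (1 - z) * (1 - / z)).
  apply (@ex_series_le C_AbsRing C_CompleteNormedModule _ (fun k => 8 * Cmod w * Cmod q ^ k)%R).
  - intros k. change (norm (R_term z q (S (N0 + k)))) with (Cmod (R_term z q (S (N0 + k)))).
    set (n := S (N0 + k)).
    assert (Hn1 : (1 <= n)%nat) by (unfold n; lia).
    destruct (Hn n Hn1) as [A1 A2].
    assert (D1 : (/ 2 <= Cmod (1 - z * q ^ n))%R) by (apply Hlow; unfold n, K; [lia|]; pose proof (Cmod_ge_0 (/ z)); lra).
    assert (D2 : (/ 2 <= Cmod (1 - / z * q ^ n))%R) by (apply Hlow; unfold n, K; [lia|]; pose proof (Cmod_ge_0 z); lra).
    assert (Hden : (/ 4 <= Cmod ((1 - z * q ^ n) * (1 - / z * q ^ n)))%R).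
    { rewrite Cmod_mult. replace (/ 4)%R with (/ 2 * / 2)%R by field. apply Rmult_le_compat; lra. }
    assert (ND : (1 - z * q ^ n) * (1 - / z * q ^ n) <> 0).
    { intro H0. rewrite H0, Cmod_0 in Hden. lra. }
    unfold R_term. fold w. rewrite Cmod_div by auto.
    set (den := Cmod ((1 - z * q ^ n) * (1 - / z * q ^ n))) in *.
    rewrite !Cmod_mult, Cmod_m1pow, Cmod_pow.
    assert (H1 : (Cmod (1 + q ^ n) <= 2)%R).
    { eapply Rle_trans. apply Cmod_triangle. rewrite Cmod_1, Cmod_pow.
      pose proof (pow_le1 (Cmod q) n ltac:(lra)). lra. }
    assert (H2 : (Cmod q ^ ((n * (3 * n + 1)) / 2) <= Cmod q ^ k)%R).
    { apply pow_mono. lra. rewrite exp_R by auto. unfold n. lia. }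
    pose proof (Cmod_ge_0 w). pose proof (Cmod_ge_0 (1 + q ^ n)).
    pose proof (pow_le (Cmod q) ((n * (3 * n + 1)) / 2) H).
    set (num := (Cmod w * 1 * Cmod q ^ ((n * (3 * n + 1)) / 2) * Cmod (1 + q ^ n))%R).
    assert (Hnum : (num <= 2 * Cmod w * Cmod q ^ k)%R).
    { unfold num. pose proof (pow_le (Cmod q) k H).
      assert (Cmod q ^ ((n * (3 * n + 1)) / 2) * Cmod (1 + q ^ n) <= Cmod q ^ k * 2)%R
        by (apply Rmult_le_compat; lra).
      assert (Cmod w * (Cmod q ^ ((n * (3 * n + 1)) / 2) * Cmod (1 + q ^ n)) <= Cmod w * (Cmod q ^ k * 2))%R
        by (apply Rmult_le_compat_l; lra).
      lra. }
    assert (0 <= num)%R by (unfold num; repeat apply Rmult_le_pos; lra).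
    assert (0 <= Cmod w * Cmod q ^ k)%R by (apply Rmult_le_pos; auto; apply pow_le; auto).
    apply (Rmult_le_reg_r den). lra.
    replace (num / den * den)%R with num by (field; lra).
    assert (H9 : ((Cmod w * Cmod q ^ k) * / 4 <= (Cmod w * Cmod q ^ k) * den)%R) by (apply Rmult_le_compat_l; lra).
    lra.
  - apply (ex_series_scal_l (V := R_NormedModule) (8 * Cmod w)%R (fun j => Cmod q ^ j)%R).
    apply ex_series_geom. rewrite Rabs_pos_eq; auto.
Qed.

Theorem lemma4p1 (q z : C) :
  (Cmod q < 1)%R ->
  z <> 0 ->
  (forall n : nat, (1 <= n)%nat -> z * q ^ n <> 1 /\ / z * q ^ n <> 1) ->
  exists P S1 S2 : C,
    is_qpoch_inf q P /\ P <> 0 /\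
    is_series (fun n => lhs_term z q (S n)) S1 /\
    is_series (fun n => R_term z q (S n)) S2 /\
    / P * (1 + S1) =
      (z + / z - 1) * (/ P * (1 + S2)) + (1 - z) * (1 - / z).
Proof.
  intros Hq Hz Hn.
  destruct (ex_e q Hq) as [E HE].
  destruct (ex_R z q Hq Hz Hn) as [S2 HS2].
  set (w := (1 - z) * (1 - / z)).
  assert (HP : is_qpoch_inf q (1 + E)) by (apply qpoch_lim; auto).
  assert (HP0 : 1 + E <> 0) by (apply (P_nz q); auto).
  exists (1 + E), ((1 - w) * S2 + w * E), S2.
  split; [auto|]. split; [auto|]. split; [|split; [auto|]].
  - pose proof (is_series_plus _ _ _ _ (is_series_scal (1 - w) _ _ HS2) (is_series_scal w _ _ HE)) as H.
    eapply is_series_ext; [|exact H].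
    intros n. destruct (Hn (S n) ltac:(lia)) as [A1 A2].
    rewrite (term_id z q (S n)); auto.
    + lia.
    + intro H0. apply A1. apply Ceq_minus in H0. auto.
    + intro H0. apply A2. apply Ceq_minus in H0. auto.
  - unfold w. field. auto.
Qed.
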